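(* Let $n\ge1$ and let $\Phi:\mathbb{R}^{n+1}\to[0,+\infty)$ be a norm. Let $\psi(\widehat\xi):=\Phi(\widehat\xi,0)$ for $\widehat\xi\in\mathbb{R}^n$ (a norm on $\mathbb{R}^n$) with dual norm $\psi^o$. Then $\psi^o(\widehat\xi^* )\le\Phi^o(\widehat\xi^*,0)$ for all $\widehat\xi^*\in\mathbb{R}^n$, and equality $\psi^o(\widehat\xi^* )=\Phi^o(\widehat\xi^*,0)$ holds for all $\widehat\xi^*\in\mathbb{R}^n$ if and only if $\Phi(\widehat\xi,\xi_{n+1})\ge\Phi(\widehat\xi,0)$ for all $(\widehat\xi,\xi_{n+1})\in\mathbb{R}^{n+1}$.
   Context: A norm on $\mathbb{R}^m$ is a convex function $\Psi:\mathbb{R}^m\to[0,+\infty)$ with $\Psi(\lambda\xi)=|\lambda|\Psi(\xi)$ and $\Psi(\xi)\ge c|\xi|$ for some $c>0$; its dual norm is $\Psi^o(\xi^* )=\sup\{\xi^*\cdot\xi:\Psi(\xi)\le1\}$. *)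

(* Defs.v *)
From HB Require Import structures.
From mathcomp Require Import all_boot all_order all_algebra.
From mathcomp Require Import classical_sets reals.
Set Implicit Arguments. Unset Strict Implicit. Unset Printing Implicit Defensive.
Import Order.TTheory GRing.Theory Num.Theory.
Local Open Scope ring_scope.
Local Open Scope classical_set_scope.

Section Norms.
Variable R : realType.

Definition dotv (m : nat) (u v : 'rV[R]_m) : R := \sum_(i < m) u 0 i * v 0 i.

Definition euclid (m : nat) (v : 'rV[R]_m) : R := Num.sqrt (dotv v v).

Definition is_norm (m : nat) (Psi : 'rV[R]_m -> R) : Prop :=
  [/\ (forall x, 0 <= Psi x),
      (forall (t : R) x y, 0 <= t -> t <= 1 ->
          Psi (t *: x + (1 - t) *: y) <= t * Psi x + (1 - t) * Psi y),
      (forall (l : R) x, Psi (l *: x) = `|l| * Psi x) &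
      (exists2 c : R, 0 < c & forall x, c * euclid x <= Psi x)].

Definition dual_norm (m : nat) (Psi : 'rV[R]_m -> R) (xs : 'rV[R]_m) : R :=
  sup [set dotv xs x | x in [set x | Psi x <= 1]].

End Norms.

(* Main.v *)
Require Import Defs.
From mathcomp Require Import all_boot all_order all_algebra.
From mathcomp Require Import classical_sets reals.
From mathcomp Require Import ring lra.
Import Order.TTheory GRing.Theory Num.Theory.
Local Open Scope ring_scope.
Local Open Scope classical_set_scope.

Section Aux.
Variable R : realType.

Lemma dotvDr m (u v w : 'rV[R]_m) : dotv u (v + w) = dotv u v + dotv u w.
Proof. by rewrite /dotv -big_split; apply: eq_bigr => i _; rewrite mxE mulrDr. Qed.
Lemma dotvDl m (u v w : 'rV[R]_m) : dotv (v + w) u = dotv v u + dotv w u.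
Proof. by rewrite /dotv -big_split; apply: eq_bigr => i _; rewrite mxE mulrDl. Qed.
Lemma dotvZr m (u v : 'rV[R]_m) a : dotv u (a *: v) = a * dotv u v.
Proof. by rewrite /dotv mulr_sumr; apply: eq_bigr => i _; rewrite mxE mulrCA. Qed.
Lemma dotvZl m (u v : 'rV[R]_m) a : dotv (a *: v) u = a * dotv v u.
Proof. by rewrite /dotv mulr_sumr; apply: eq_bigr => i _; rewrite mxE mulrA. Qed.
Lemma dotv0r m (u : 'rV[R]_m) : dotv u 0 = 0.
Proof. by rewrite /dotv big1 // => i _; rewrite mxE mulr0. Qed.
Lemma dotvNr m (u v : 'rV[R]_m) : dotv u (- v) = - dotv u v.
Proof. by rewrite -scaleN1r dotvZr mulN1r. Qed.
Lemma dotv_deltal m (k : 'I_m) (y : 'rV[R]_m) : dotv (delta_mx 0 k) y = y 0 k.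
Proof.
rewrite /dotv (bigD1 k) //= big1 ?addr0; first by rewrite mxE !eqxx mul1r.
by move=> i ik; rewrite mxE (negbTE ik) andbF mul0r.
Qed.

Lemma dotv_deltar m (k : 'I_m) (y : 'rV[R]_m) : dotv y (delta_mx 0 k) = y 0 k.
Proof.
rewrite /dotv (bigD1 k) //= big1 ?addr0; first by rewrite mxE !eqxx mulr1.
by move=> i ik; rewrite mxE (negbTE ik) andbF mulr0.
Qed.

Definition inM m (k : nat) (y : 'rV[R]_m) := forall j : 'I_m, (k <= j)%N -> y 0 j = 0.
Arguments inM {m}.

Lemma minorant m (p : 'rV[R]_m -> R) :
  (forall y z, p (y + z) <= p y + p z) ->
  (forall t y, 0 < t -> t * p y <= p (t *: y)) ->
  exists g, forall y, dotv g y <= p y.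
Proof.
move=> psub phom.
suff H : forall k, (k <= m)%N -> exists g, forall y, inM k y -> dotv g y <= p y.
  have [g Hg] := H m (leqnn m); exists g => y; apply: Hg => j.
  by rewrite leqNgt ltn_ord.
elim=> [_|k IH km].
  exists 0 => y Hy.
  have -> : y = 0 by apply/matrixP => i j; rewrite ord1 mxE; apply: Hy.
  rewrite dotv0r; have := psub 0 0; rewrite addr0; lra.
have [g Hg] := IH (ltnW km).
pose kk : 'I_m := Ordinal km.
pose e : 'rV[R]_m := delta_mx 0 kk.
have inMD (y z : 'rV[R]_m) : inM k y -> inM k z -> inM k (y + z).
  by move=> hy hz j hj; rewrite mxE (hy j hj) (hz j hj) addr0.
have inMZ a (y : 'rV[R]_m) : inM k y -> inM k (a *: y).
  by move=> hy j hj; rewrite mxE (hy j hj) mulr0.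
have inM0 : inM k (0 : 'rV[R]_m) by move=> j hj; rewrite mxE.
have key y z : inM k y -> inM k z -> dotv g y - p (y - e) <= p (z + e) - dotv g z.
  move=> hy hz; have := Hg _ (inMD _ _ hy hz); rewrite dotvDr.
  have := psub (y - e) (z + e).
  have -> : y - e + (z + e) = y + z by rewrite addrACA addNr addr0.
  lra.
pose A := [set dotv g y - p (y - e) | y in [set y | inM k y]].
have A0 : A !=set0 by exists (dotv g 0 - p (0 - e)); exists 0.
have Aub : has_ubound A.
  exists (p (0 + e) - dotv g 0) => _ [y hy <-]; exact: key.
pose c := sup A.
have c_le z : inM k z -> c <= p (z + e) - dotv g z.
  by move=> hz; apply: ge_sup => // _ [y hy <-]; exact: key.
have le_c y : inM k y -> dotv g y - p (y - e) <= c.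
  by move=> hy; apply: ub_le_sup => //; exists y.
exists (g + (c - g 0 kk) *: e) => w hw.
pose t := w 0 kk.
pose y := w - t *: e.
have hy : inM k y.
  move=> j hj; rewrite !mxE.
  case: (eqVneq j kk) => [->|jk]; first by rewrite !eqxx mulr1 subrr.
  rewrite hw ?(negbTE jk) ?andbF ?mulr0 ?subr0 //.
  by rewrite ltn_neqAle hj andbT; apply: contra jk => /eqP jk; apply/eqP/val_inj.
have wE : w = y + t *: e by rewrite /y subrK.
clearbody t y.
have -> : dotv (g + (c - g 0 kk) *: e) w = dotv g y + t * c.
  rewrite wE dotvDr dotvZr !dotvDl !dotvZl /e !dotv_deltal.
  rewrite (hy kk (leqnn k)) mulr0 addr0.
  rewrite dotv_deltar mxE !eqxx mulr1; congr (_ + _); congr (_ * _); lra.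
rewrite wE.
case: (ltrgtP t 0) => ht.
- pose s := - t.
  have hs : 0 < s by rewrite /s oppr_gt0.
  have := le_c _ (inMZ s^-1 _ hy).
  rewrite dotvZr => h1.
  have := phom s (s^-1 *: y - e) hs.
  rewrite scalerDr scalerN scalerA divff ?gt_eqF // scale1r.
  have -> : y - s *: e = y + t *: e by rewrite /s scaleNr opprK.
  move=> h2.
  have : s * (s^-1 * dotv g y - p (s^-1 *: y - e)) <= s * c by rewrite ler_pM2l.
  rewrite mulrBr mulrA divff ?gt_eqF // mul1r.
  rewrite /s in h2 *; lra.
- have := c_le _ (inMZ t^-1 _ hy).
  rewrite dotvZr => h1.
  have := phom t (t^-1 *: y + e) ht.
  rewrite scalerDr scalerA divff ?gt_eqF // scale1r => h2.
  have : t * c <= t * (p (t^-1 *: y + e) - t^-1 * dotv g y) by rewrite ler_pM2l.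
  rewrite mulrBr mulrA divff ?gt_eqF // mul1r.
  lra.
- rewrite ht scale0r addr0 mul0r addr0; exact: Hg.
Qed.

Lemma support m (p : 'rV[R]_m -> R) :
  (forall y z, p (y + z) <= p y + p z) ->
  (forall (l : R) y, p (l *: y) = `|l| * p y) ->
  forall x0, exists g, p x0 <= dotv g x0 /\ forall y, dotv g y <= p y.
Proof.
move=> psub phom x0.
have p0 : p 0 = 0 by rewrite -(scale0r 0) phom normr0 mul0r.
pose S y := [set p (y + t *: x0) - t * p x0 | t in [set t : R | 0 <= t]].
pose q y := inf (S y).
have S0 y : S y !=set0 by exists (p (y + 0 *: x0) - 0 * p x0); exists 0 => //=.
have Slb y : has_lbound (S y).
  exists (- p (- y)) => _ [t /= ht <-].
  have := psub (y + t *: x0) (- y).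
  rewrite addrAC subrr add0r phom ger0_norm //; lra.
have qle y t : 0 <= t -> q y <= p (y + t *: x0) - t * p x0.
  by move=> ht; apply: ge_inf => //; exists t.
have qp y : q y <= p y.
  by have := qle y 0 (lexx _); rewrite scale0r addr0 mul0r subr0.
have qx0 : q (- x0) <= - p x0.
  by have := qle (- x0) 1 ler01; rewrite scale1r addNr p0 mul1r sub0r.
have qsub y z : q (y + z) <= q y + q z.
  suff : q (y + z) - q y <= q z by lra.
  apply: lb_le_inf => // _ [s /= hs <-].
  suff : q (y + z) - (p (z + s *: x0) - s * p x0) <= q y by lra.
  apply: lb_le_inf => // _ [t /= ht <-].
  have := qle (y + z) (t + s) (addr_ge0 ht hs).
  have := psub (y + t *: x0) (z + s *: x0).
  have -> : y + t *: x0 + (z + s *: x0) = y + z + (t + s) *: x0.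
    by rewrite scalerDl addrACA.
  lra.
have qhom t y : 0 < t -> t * q y <= q (t *: y).
  move=> ht; apply: lb_le_inf => // _ [s /= hs <-].
  have hti : 0 <= t^-1 by rewrite invr_ge0 ltW.
  have := qle y (t^-1 * s) (mulr_ge0 hti hs).
  move=> h.
  have : t * q y <= t * (p (y + (t^-1 * s) *: x0) - t^-1 * s * p x0) by rewrite ler_pM2l.
  rewrite mulrBr !mulrA divff ?gt_eqF // mul1r.
  have -> : t * p (y + (t^-1 * s) *: x0) = p (t *: y + s *: x0).
    have E := phom t (y + (t^-1 * s) *: x0); rewrite ger0_norm ?(ltW ht) // in E.
    by rewrite -E scalerDr scalerA mulrA divff ?gt_eqF // mul1r.
  done.
have [g hg] := @minorant m q qsub qhom.
exists g; split; last by move=> y; apply: le_trans (hg y) (qp y).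
have := hg (- x0); rewrite dotvNr; lra.
Qed.

Lemma norm_sub m (P : 'rV[R]_m -> R) : is_norm P -> forall y z, P (y + z) <= P y + P z.
Proof.
case=> P0 Pc Ph _ y z.
have h : (0 : R) <= 2^-1 by rewrite invr_ge0.
have h1 : (2^-1 : R) <= 1 by rewrite invf_le1 // ler1n.
have := Pc 2^-1 (2 *: y) (2 *: z) h h1.
have -> : (1 - 2^-1 : R) = 2^-1 by field.
rewrite !scalerA mulVf ?pnatr_eq0 // !scale1r !Ph ger0_norm ?ler0n //.
have -> : (2^-1 * (2 * P y) + 2^-1 * (2 * P z) : R) = P y + P z by field.
done.
Qed.

Lemma norm0 m (P : 'rV[R]_m -> R) : is_norm P -> P 0 = 0.
Proof. by case=> _ _ Ph _; rewrite -(scale0r 0) Ph normr0 mul0r. Qed.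

Lemma coord_le_euclid m (x : 'rV[R]_m) i : `|x 0 i| <= euclid x.
Proof.
rewrite /euclid -sqrtr_sqr ler_wsqrtr // /dotv (bigD1 i) //= expr2 lerDl.
by apply: sumr_ge0 => j _; rewrite -expr2 sqr_ge0.
Qed.

Lemma dual_ub m (P : 'rV[R]_m -> R) (w : 'rV[R]_m) : is_norm P ->
  has_ubound [set dotv w x | x in [set x | P x <= 1]].
Proof.
move=> hP; have [_ _ _ [c c0 hc]] := hP.
exists ((\sum_i `|w 0 i|) / c) => _ [x /= hx <-].
have ex : euclid x <= c^-1.
  have := le_trans (hc x) hx; rewrite -ler_pdivlMl //.
  by rewrite mulr1.
apply: (@le_trans _ _ (\sum_i `|w 0 i| * euclid x)).
  rewrite /dotv; apply: ler_sum => i _.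
  apply: le_trans (ler_norm _) _; rewrite normrM.
  by apply: ler_wpM2l => //; apply: coord_le_euclid.
rewrite -mulr_suml; apply: ler_wpM2l => //.
by apply: sumr_ge0 => i _.
Qed.

Lemma dual_ne m (P : 'rV[R]_m -> R) (w : 'rV[R]_m) : is_norm P ->
  [set dotv w x | x in [set x | P x <= 1]] !=set0.
Proof. by move=> hP; exists (dotv w 0); exists 0 => //=; rewrite norm0. Qed.

Lemma dotv_row_mx m k (a c : 'rV[R]_m) (b d : 'rV[R]_k) :
  dotv (row_mx a b) (row_mx c d) = dotv a c + dotv b d.
Proof.
by rewrite /dotv big_split_ord /=; congr (_ + _); apply: eq_bigr => i _;
  rewrite ?row_mxEl ?row_mxEr.
Qed.

Lemma dotv0l m (u : 'rV[R]_m) : dotv 0 u = 0.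
Proof. by rewrite /dotv big1 // => i _; rewrite mxE mul0r. Qed.

Lemma euclid_row_mx0 m k (x : 'rV[R]_m) : euclid (row_mx x (0 : 'rV[R]_k)) = euclid x.
Proof. by rewrite /euclid dotv_row_mx dotv0l addr0. Qed.

End Aux.
Arguments norm_sub {R m P}.
Arguments support {R m p}.
Arguments dual_ub {R m P}.
Arguments dual_ne {R m P}.

Local Close Scope classical_set_scope.

Lemma M1E (R : realType) (b : 'rV[R]_1) : b = (b 0 0)%:M.
Proof. by apply/matrixP => i j; rewrite !ord1 mxE eqxx mulr1n. Qed.

Theorem lemmaA4 (R : realType) (n : nat) (hn : (1 <= n)%N)
  (Phi : 'rV[R]_(n + 1) -> R) (hPhi : is_norm Phi) :
  let psi := fun xh : 'rV[R]_n => Phi (row_mx xh 0) in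
  [/\ is_norm psi,
      (forall xs : 'rV[R]_n, dual_norm psi xs <= dual_norm Phi (row_mx xs 0)) &
      ((forall xs : 'rV[R]_n, dual_norm psi xs = dual_norm Phi (row_mx xs 0)) <->
       (forall (xh : 'rV[R]_n) (a : R), Phi (row_mx xh 0) <= Phi (row_mx xh a%:M)))].
Proof.
move=> psi.
have hpsi : is_norm psi.
  have [P0 Pc Ph [c c0 hc]] := hPhi.
  split.
  - by move=> x; apply: P0.
  - move=> t x y ht1 ht2; rewrite /psi.
    have -> : row_mx (t *: x + (1 - t) *: y) (0 : 'rV[R]_1) =
              t *: row_mx x 0 + (1 - t) *: row_mx y 0.
      by rewrite !scale_row_mx add_row_mx !scaler0 addr0.
    exact: Pc.
  - move=> l x; rewrite /psi -Ph.
    by rewrite scale_row_mx scaler0.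
  - exists c => // x; rewrite /psi -(@euclid_row_mx0 R n 1 x); exact: hc.
have part2 xs : dual_norm psi xs <= dual_norm Phi (row_mx xs 0).
  apply: ge_sup; first exact: dual_ne.
  move=> _ [x /= hx <-].
  have -> : dotv xs x = dotv (row_mx xs (0 : 'rV[R]_1)) (row_mx x 0).
    by rewrite dotv_row_mx dotv0l addr0.
  by apply: ub_le_sup; [exact: dual_ub | exists (row_mx x 0)].
split => //; split.
- move=> heq xh a.
  have psub := norm_sub hpsi.
  have phom : forall (l : R) y, psi (l *: y) = `|l| * psi y.
    by case: hpsi.
  have [g [hg1 hg2]] := support psub phom xh.
  have hd : dual_norm psi g <= 1.
    apply: ge_sup; first exact: dual_ne.
    by move=> _ [y /= hy <-]; apply: le_trans (hg2 y) hy.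
  rewrite heq in hd.
  set N := Phi (row_mx xh a%:M).
  have N0 : 0 <= N.
    by have [P0 _ _ _] := hPhi; apply: P0.
  apply/ler_addgt0Pr => e he.
  have hNe : 0 < N + e by lra.
  have hw : Phi ((N + e)^-1 *: row_mx xh a%:M) <= 1.
    have [_ _ Ph _] := hPhi.
    rewrite Ph ger0_norm; last by rewrite invr_ge0 ltW.
    rewrite ler_pdivrMl // mulr1 /N; lra.
  have := ub_le_sup (dual_ub (row_mx g 0) hPhi) (ex_intro2 _ _ ((N + e)^-1 *: row_mx xh a%:M) hw erefl).
  rewrite dotvZr dotv_row_mx dotv0l addr0 => h.
  have := le_trans h hd; rewrite ler_pdivrMl // mulr1 => h2.
  rewrite /psi in hg1; lra.
- move=> hge xs; apply/eqP; rewrite eq_le part2 andTb.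
  apply: ge_sup; first exact: dual_ne.
  move=> _ [w /= hw <-].
  rewrite -(hsubmxK w) (@M1E R (rsubmx w)) dotv_row_mx dotv0l addr0.
  apply: ub_le_sup; first exact: dual_ub.
  exists (lsubmx w) => //=.
  apply: le_trans (hge _ (rsubmx w 0 0)) _.
  by rewrite -(@M1E R) hsubmxK.
Qed.
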